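(* Let $\mathcal{F}$ be a hypothesis class of functions $\mathcal{X}\to\{\pm1\}$ with finite VC dimension $d$, and $\mathcal{P}$ an unknown distribution on $\mathcal{X}\times\{\pm1\}$. Consider a run of Active-ILESS with accuracy parameter $\epsilon$ and confidence $\delta$, and suppose the event $\mathcal{K}$ occurred. Then the total number of examples processed by the run (whether or not their labels were requested) is $$O\Big(\frac1\epsilon\ln\frac1\epsilon+\frac{R(f^* )}{\epsilon^2}\ln\frac{R(f^* )}{\epsilon^2}\Big),$$ where factors depending on $d$ and $\ln(1/\delta)$ are hidden in the $O$, and $R(f^* )$ is the minimal true risk over $\mathcal{F}$.
   Context: $R(f)=\Pr_{\mathcal{P}}[f(X)\ne Y]$; $\hat R(f,S)$ is the fraction of examples of $S$ misclassified by $f$; $f^*$ is any minimizer of $R$ over $\mathcal{F}$. Slacks: for $n>0$, $\delta'\in(0,1)$, $A=4d\ln\frac{16ne}{d\delta'}$, $\hat\sigma_{R-\hat R}(n,\delta',d,\hat r)=\frac{A}{n}+\sqrt{\frac{A}{n}\hat r}$, $\bar\sigma_{R-\hat R}(n,\delta',d,r)=\sqrt{\frac{A}{n}r}$, $\bar\sigma_{\hat R-R}(n,\delta',d,r)=\frac{A}{n}+\sqrt{\frac{A}{n}r}$, $\hat\sigma_{\hat R-R}(n,\delta',d,\hat r)=\sqrt{\frac{A}{n}\hat r}$, $\sigma_{R-\hat R}=\min\{\hat\sigma_{R-\hat R}(\cdot,\hat r),\bar\sigma_{R-\hat R}(\cdot,r)\}$, $\sigma_{\hat R-R}=\min\{\bar\sigma_{\hat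 R-R}(\cdot,r),\hat\sigma_{\hat R-R}(\cdot,\hat r)\}$. $AGR(G)=\{x:\text{all }f\in G\text{ agree on }x\}$. Active-ILESS (inputs: $\epsilon$ and/or budget $m$, confidence $\delta$, $\mathcal{F}$, $d$, i.i.d. stream $x_1,x_2,\dots$ from $\mathcal{P}$): initialize $\hat S=\emptyset$, $G_0=\mathcal{F}$, $t=1$; for each $x_t$: if $x_t\in AGR(G_{t-1})$ do not request its label and set $y_t=f(x_t)$ for any $f\in G_{t-1}$, otherwise request the true label $y_t$; add $(x_t,y_t)$ to $\hat S$; let $\hat f$ be an ERM on $\hat S$; if $\log_2t\in\mathbb{N}$: set $\sigma_{\rm Active}=\hat\sigma_{R-\hat R}(\tfrac t2,\tfrac\delta{2t},d,\hat R(\hat f,\hat S))+\bar\sigma_{\hat R-R}\big(\tfrac t2,\tfrac\delta{2t},d,\hat R(\hat f,\hat S)+\hat\sigma_{R-\hat R}(\tfrac t2,\tfrac\delta{2t},d,\hat R(\hat f,\hat S))\big)$, terminate returning $\hat f$ if $\epsilon$ was given and $\sigma_{\rm Active}<\epsilon$, set $G_t=\{f:\hat R(f,\hat S)\le\hat R(\hat f,\hat S)+\sigma_{\rm Active}\}$ and reset $\hat S=\emptyset$; otherwise $G_t=G_{t-1}$; if $m$ was given and $t=m$ terminate returning $\hat f$; increment $t$. For $G\subseteq\mathcal{F}$, $\mathcal{P}(G)$ is the distribution of $(X,Y')$ with $(X,Y)\sim\mathcal{P}$, $Y'$ = common value of $G$ at $X$ if $X\in AGR(G)$ and $Y'=Y$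 otherwise; $R_{\mathcal{P}(G)}(f)=\Pr[f(X)\ne Y']$. Event $\mathcal{K}$: for every $t=2^i$ reached and every $f\in\mathcal{F}$, with $\hat R(f)=\hat R(f,\hat S)$ for $\hat S$ at iteration $t$ before reset, $R_{\mathcal{P}(G_{t-1})}(f)\le\hat R(f)+\sigma_{R-\hat R}(\tfrac t2,\tfrac\delta{2t},d,R_{\mathcal{P}(G_{t-1})}(f),\hat R(f))$ and $\hat R(f)\le R_{\mathcal{P}(G_{t-1})}(f)+\sigma_{\hat R-R}(\tfrac t2,\tfrac\delta{2t},d,R_{\mathcal{P}(G_{t-1})}(f),\hat R(f))$. *)

(* Defs.v *)
From mathcomp Require Import all_boot all_order all_algebra all_classical all_reals all_analysis.
Set Implicit Arguments. Unset Strict Implicit. Unset Printing Implicit Defensive.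
Import Order.TTheory GRing.Theory Num.Theory.
Local Open Scope classical_set_scope.
Local Open Scope ring_scope.

(* Labels {-1,+1} are encoded by bool. Hypotheses are functions X -> bool;
   a hypothesis class is a set of such functions. *)

Definition shatters (X : Type) (F : set (X -> bool)) (n : nat) (s : 'I_n -> X) :=
  injective s /\ forall lab : 'I_n -> bool, exists f, F f /\ forall i, f (s i) = lab i.

Definition VCdim (X : Type) (F : set (X -> bool)) (d : nat) :=
  (exists s : 'I_d -> X, shatters F s) /\
  (forall s : 'I_d.+1 -> X, ~ shatters F s).

Section Slacks.
Variable R : realType.

Definition Acst (n dl : R) (d : nat) : R :=
  4 * d%:R * ln (16 * n * expR 1 / (d%:R * dl)).

Definition sig_hat_RmRh (n dl : R) (d : nat) (rh : R) : R :=
  Acst n dl d / n + Num.sqrt (Acst n dl d / n * rh).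
Definition sig_bar_RmRh (n dl : R) (d : nat) (r : R) : R :=
  Num.sqrt (Acst n dl d / n * r).
Definition sig_bar_RhmR (n dl : R) (d : nat) (r : R) : R :=
  Acst n dl d / n + Num.sqrt (Acst n dl d / n * r).
Definition sig_hat_RhmR (n dl : R) (d : nat) (rh : R) : R :=
  Num.sqrt (Acst n dl d / n * rh).

Definition sig_RmRh (n dl : R) (d : nat) (r rh : R) : R :=
  Num.min (sig_hat_RmRh n dl d rh) (sig_bar_RmRh n dl d r).
Definition sig_RhmR (n dl : R) (d : nat) (r rh : R) : R :=
  Num.min (sig_bar_RhmR n dl d r) (sig_hat_RhmR n dl d rh).

(* sigma_Active at iteration t, with rh = \hat R(\hat f, \hat S) *)
Definition sig_active (d : nat) (delta : R) (t : nat) (rh : R) : R :=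
  let n := t%:R / 2 in
  let dl := delta / (2 * t%:R) in
  sig_hat_RmRh n dl d rh + sig_bar_RhmR n dl d (rh + sig_hat_RmRh n dl d rh).

End Slacks.

Section Risks.
Variables (R : realType) (dX : measure_display) (X : measurableType dX).

Definition risk (P : probability (X * bool)%type R) (f : X -> bool) : R :=
  fine (P [set z | f z.1 != z.2]).

Definition AGR (G : set (X -> bool)) : set X :=
  [set x | forall f g, G f -> G g -> f x = g x].

(* R_{P(G)}(f) = Pr[f(X) <> Y'] with Y' the common value of G on AGR(G),
   and Y' = Y outside AGR(G). *)
Definition riskG (P : probability (X * bool)%type R) (G : set (X -> bool))
    (f : X -> bool) : R :=
  fine (P [set z | (AGR G z.1 /\ exists g, G g /\ f z.1 != g z.1)
                   \/ (~ AGR G z.1 /\ f z.1 != z.2)]).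
End Risks.

Definition is_pow2 (t : nat) := exists i : nat, t = (2 ^ i)%N.

Section Run.
Variables (R : realType) (X : Type).

(* Empirical risk of f on \hat S at iteration t = 2^i (before reset):
   \hat S consists of the examples s with t/2 < s <= t (for t = 1: s = 1).
   xs s is the s-th point of the stream, yl s the label stored for it. *)
Definition Rhat (xs : nat -> X) (yl : nat -> bool) (t : nat) (f : X -> bool) : R :=
  (\sum_((t %/ 2).+1 <= s < t.+1) ((f (xs s) != yl s) : nat))%:R
    / (t - t %/ 2)%:R.

(* A run of Active-ILESS (epsilon-version) on the stream xs (x_1, x_2, ...,
   index 0 unused) with true labels ys: G t is G_t, yl t is the label y_t added
   to \hat S (requested or inferred), fh t is the ERM computed at iteration t
   (only relevant when t is a power of 2). Any choice of ERM is allowed. *)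
Definition is_run (F : set (X -> bool)) (d : nat) (delta : R)
    (xs : nat -> X) (ys : nat -> bool)
    (G : nat -> set (X -> bool)) (yl : nat -> bool) (fh : nat -> X -> bool) :=
  G 0%N = F /\
  (forall t, (1 <= t)%N ->
     (((forall f g, G t.-1 f -> G t.-1 g -> f (xs t) = g (xs t)) ->
        forall g, G t.-1 g -> yl t = g (xs t)) /\
      (~ (forall f g, G t.-1 f -> G t.-1 g -> f (xs t) = g (xs t)) ->
        yl t = ys t))) /\
  (forall t, (1 <= t)%N -> is_pow2 t ->
     F (fh t) /\ forall f, F f -> Rhat xs yl t (fh t) <= Rhat xs yl t f) /\
  (forall t, (1 <= t)%N -> is_pow2 t ->
     G t = [set f | F f /\
        Rhat xs yl t f <= Rhat xs yl t (fh t)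
                          + sig_active d delta t (Rhat xs yl t (fh t))]) /\
  (forall t, (1 <= t)%N -> ~ is_pow2 t -> G t = G t.-1).

Definition stops (d : nat) (delta eps : R) (xs : nat -> X) (yl : nat -> bool)
    (fh : nat -> X -> bool) (t : nat) :=
  is_pow2 t /\ sig_active d delta t (Rhat xs yl t (fh t)) < eps.

Definition reached (d : nat) (delta eps : R) (xs : nat -> X) (yl : nat -> bool)
    (fh : nat -> X -> bool) (t : nat) :=
  forall s, (s < t)%N -> ~ stops d delta eps xs yl fh s.
End Run.

Definition eventK (R : realType) (dX : measure_display) (X : measurableType dX)
    (P : probability (X * bool)%type R) (F : set (X -> bool)) (d : nat)
    (delta eps : R) (xs : nat -> X) (G : nat -> set (X -> bool))
    (yl : nat -> bool) (fh : nat -> X -> bool) :=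
  forall t, is_pow2 t -> reached d delta eps xs yl fh t ->
  forall f, F f ->
    let n := t%:R / 2 in
    let dl := delta / (2 * t%:R) in
    riskG P (G t.-1) f <= Rhat R xs yl t f
        + sig_RmRh n dl d (riskG P (G t.-1) f) (Rhat R xs yl t f) /\
    Rhat R xs yl t f <= riskG P (G t.-1) f
        + sig_RhmR n dl d (riskG P (G t.-1) f) (Rhat R xs yl t f).

(* Main.v *)
Require Import Defs.
From mathcomp Require Import all_boot all_order all_algebra all_classical all_reals all_analysis.
From mathcomp Require Import ring lra.
Import Order.TTheory GRing.Theory Num.Theory.
Local Open Scope classical_set_scope.
Local Open Scope ring_scope.

Section S0.
Variable R : realType.

Lemma pow2_between (Y : R) : 1 <= Y -> exists k, Y <= (2^k)%N%:R /\ (2^k)%N%:R <= 2*Y.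
Proof.
move=> Y1.
have ex : exists k, Y <= (2^k)%N%:R.
  exists (Num.trunc Y).+1; apply: ltW; apply: (lt_le_trans (truncnS_gt Y)).
  by rewrite ler_nat; apply: ltnW; apply: ltn_expl.
case: (ex_minnP ex) => k Hk Hmin; exists k; split => //.
case: k Hk Hmin => [|k] Hk Hmin; first by rewrite expn0; lra.
rewrite leNgt; apply/negP => H.
have : Y <= (2^k)%N%:R.
  by move: H; rewrite expnS natrM; lra.
move/Hmin; rewrite ltnn //.
Qed.

Lemma ln_le_sub1 (y : R) : 0 < y -> ln y <= y - 1.
Proof.
move=> y0; have := expR_ge1Dx (ln y); rewrite lnK ?posrE //; lra.
Qed.

Lemma sqrt_le (x y : R) : 0 <= y -> x <= y ^+ 2 -> Num.sqrt x <= y.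
Proof.
move=> y0 h; rewrite -(ger0_norm y0) -sqrtr_sqr ler_sqrt //; exact: sqr_ge0.
Qed.

Lemma sqrt_mono_mul (a r r' : R) : 0 <= r -> r <= r' -> Num.sqrt (a * r) <= Num.sqrt (a * r').
Proof.
move=> r0 rr; have [a0|a0] := leP 0 a.
  by rewrite ler_sqrt ?mulr_ge0 ?ler_wpM2l //; apply: le_trans rr.
apply: le_trans (sqrtr_ge0 _); apply: sqrt_le => //; rewrite expr0n /=; nra.
Qed.

End S0.

Section S1.
Variable R : realType.

Lemma final_bound (a eps rho r rh : R) : 0 < eps -> a <= eps / 16 ->
  a * rho <= eps ^+ 2 / 100 -> 0 <= r -> r <= rho -> 0 <= rh ->
  rh <= r + (a + Num.sqrt (a * r)) ->
  (a + Num.sqrt (a * rh)) + (a + Num.sqrt (a * (rh + (a + Num.sqrt (a * rh))))) < eps.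
Proof.
move=> e0 ha har r0 rr rh0 hrh.
have [a0|a0] := leP 0 a.
  have s0 : Num.sqrt (a * r) <= eps / 10.
    apply: sqrt_le; first lra.
    have : a * r <= a * rho by nra.
    nra.
  have s0p := sqrtr_ge0 (a * r).
  have s1 : Num.sqrt (a * rh) <= eps / 7.
    apply: sqrt_le; first lra.
    have h1 : a * rh <= a * (rho + a + Num.sqrt (a * r)) by apply: ler_wpM2l => //; lra.
    have h2 : a * Num.sqrt (a * r) <= eps / 16 * (eps / 10) by nra.
    have h3 : a * a <= eps / 16 * (eps / 16) by nra.
    nra.
  have s1p := sqrtr_ge0 (a * rh).
  have s2 : Num.sqrt (a * (rh + (a + Num.sqrt (a * rh)))) <= eps / 5.
    apply: sqrt_le; first lra.
    have h1 : a * rh <= a * (rho + a + Num.sqrt (a * r)) by apply: ler_wpM2l => //; lra.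
    have h2 : a * Num.sqrt (a * r) <= eps / 16 * (eps / 10) by nra.
    have h3 : a * a <= eps / 16 * (eps / 16) by nra.
    have h4 : a * Num.sqrt (a * rh) <= eps / 16 * (eps / 7) by nra.
    nra.
  lra.
have s1 : Num.sqrt (a * rh) <= 0.
  by apply: sqrt_le => //; rewrite expr0n /=; nra.
have s1p := sqrtr_ge0 (a * rh).
have s2 : Num.sqrt (a * (rh + (a + Num.sqrt (a * rh)))) <= - a.
  apply: sqrt_le; first lra.
  have -> : Num.sqrt (a * rh) = 0 by lra.
  nra.
lra.
Qed.
End S1.

Section S2.
Variable R : realType.

Lemma req (K0 M t : R) : 0 < M -> 0 < t -> 2 * M * (K0 + 2 * ln (4 * M)) <= t ->
  M * (K0 + 2 * ln t) <= t.
Proof.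
move=> M0 t0 h.
have e : t = (4 * M) * (t / (4 * M)) by field; lra.
have hl : ln t = ln (4 * M) + ln (t / (4 * M)).
  by rewrite {1}e lnM // posrE; [lra | apply: divr_gt0; lra].
have h3 : ln (t / (4 * M)) <= t / (4 * M) - 1.
  by apply: ln_le_sub1; apply: divr_gt0; lra.
have h4 : M * (t / (4 * M)) = t / 4 by field; lra.
rewrite hl; nra.
Qed.

Lemma Ybound (K0 d' x M : R) : 0 <= K0 -> 1 <= d' -> 1 <= ln x -> 0 < M ->
  M <= 1000 * d' * x -> 1 <= 4 * M ->
  2 * M * (K0 + 2 * ln (4 * M)) <= 2000 * d' * (K0 + 2 * ln (4000 * d') + 2) * (x * ln x).
Proof.
move=> K0p d1 lx M0 Mx M1.
have x0 : 0 < x.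
  rewrite ltNge; apply/negP => hx; move: lx; rewrite ln0 //; lra.
have l1 : ln (4 * M) <= ln (4000 * d') + ln x.
  rewrite -lnM ?posrE; [|lra|lra].
  rewrite ler_ln ?posrE; [nra|lra|nra].
have l2 : 0 <= ln (4 * M) by apply: ln_ge0.
have l3 : 0 <= ln (4000 * d') by apply: ln_ge0; lra.
have h1 : K0 + 2 * ln (4 * M) <= (K0 + 2 * ln (4000 * d') + 2) * ln x by nra.
have h2 : 2 * M * (K0 + 2 * ln (4 * M)) <= 2 * (1000 * d' * x) * (K0 + 2 * ln (4 * M)).
  apply: ler_wpM2r; lra.
nra.
Qed.

Lemma a_small (a t d' Lt M e' eps rho : R) : 0 < t -> 0 < d' -> 0 <= Lt ->
  a * t <= 8 * d' * Lt -> M * Lt <= t -> M = d' * (128 * e' + 800 * rho * e' ^+ 2) ->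
  e' * eps = 1 -> 0 < eps -> 0 <= rho -> a <= eps / 16 /\ a * rho <= eps ^+ 2 / 100.
Proof.
move=> t0 d0 L0 hat hM hMd he e0 r0.
have e'0 : 0 < e' by nra.
have [a0|a0] := leP a 0; first by split; nra.
have M0 : 0 <= M by rewrite hMd; apply: mulr_ge0; [lra|nra].
have h1 : a * t * M <= 8 * d' * t.
  have : a * t * M <= 8 * d' * Lt * M by apply: ler_wpM2r.
  nra.
have h2 : a * M <= 8 * d'.
  have : (a * M) * t <= (8 * d') * t by nra.
  by rewrite ler_pM2r.
rewrite hMd in h2.
have h3 : a * (128 * e' + 800 * rho * e' ^+ 2) <= 8.
  have : d' * (a * (128 * e' + 800 * rho * e' ^+ 2)) <= d' * 8 by nra.
  by rewrite ler_pM2l.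
have h4 : 0 <= a * rho * e' ^+ 2.
  by apply: mulr_ge0; [apply: mulr_ge0; lra | apply: sqr_ge0].
split.
- have : a * 128 * e' <= 8 by nra.
  nra.
- have hX : 800 * (a * rho * e' ^+ 2) <= 8 by nra.
  have hX' : a * rho * e' ^+ 2 <= 1 / 100 by lra.
  have : (a * rho) * (e' * eps) ^+ 2 = (a * rho * e' ^+ 2) * eps ^+ 2 by ring.
  rewrite he expr1n mulr1 => ->.
  have := ler_wpM2r (sqr_ge0 eps) hX'.
  lra.
Qed.
End S2.

Section S3.
Variable R : realType.

Lemma A_bound (d : nat) (delta t : R) : 0 < delta < 1 -> 1 <= t ->
  Acst (t / 2) (delta / (2 * t)) d / (t / 2) * t
    <= 8 * (d%:R + 1) * (ln (16 * expR 1 / delta) + 2 * ln t).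
Proof.
move=> /andP[d0 d1] t1.
have e1 : 1 <= expR 1 :> R by have := expR_ge1Dx (1 : R); lra.
have K0 : 0 <= ln (16 * expR 1 / delta).
  apply: ln_ge0; rewrite ler_pdivlMr //; nra.
have lt0 : 0 <= ln t by apply: ln_ge0.
have -> : Acst (t / 2) (delta / (2 * t)) d / (t / 2) * t = 2 * Acst (t / 2) (delta / (2 * t)) d.
  by field; lra.
rewrite /Acst.
case: d => [|d]; first by rewrite !mulr0 mul0r; nra.
have dp : 1 <= d.+1%:R :> R by rewrite ler1n.
have -> : 16 * (t / 2) * expR 1 / (d.+1%:R * (delta / (2 * t))) =
          (16 * expR 1 / delta) * t ^+ 2 / d.+1%:R.
  by field; apply/and3P; split; apply/negP/negP; lra.
have hq : ln ((16 * expR 1 / delta) * t ^+ 2 / d.+1%:R) <= ln (16 * expR 1 / delta) + 2 * ln t.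
  have p1 : 0 < 16 * expR 1 / delta by apply: divr_gt0; lra.
  have p2 : 0 < t ^+ 2 by apply: exprn_gt0; lra.
  have -> : 2 * ln t = ln (t ^+ 2) by rewrite lnXn; [rewrite mulr_natl | lra].
  rewrite -lnM ?posrE //.
  rewrite ler_ln ?posrE; last first.
  - by apply: mulr_gt0.
  - by apply: divr_gt0; [apply: mulr_gt0|lra].
  rewrite ler_pdivrMr; last by lra.
  have : 0 < 16 * expR 1 / delta * t ^+ 2 by apply: mulr_gt0.
  nra.
have : 0 <= d.+1%:R :> R by lra.
nra.
Qed.
End S3.

Section Prob.
Variables (R : realType) (dX : measure_display) (X : measurableType dX)
  (P : probability (X * bool)%type R).

Let p (A : set (X * bool)) : R := fine (P A).

Lemma p_ge0 A : 0 <= p A.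
Proof. by apply: fine_ge0. Qed.

Lemma pU A B : measurable A -> measurable B -> A `&` B = set0 -> p (A `|` B) = p A + p B.
Proof.
move=> mA mB AB; rewrite /p measureU // fineD //; exact: fin_num_measure.
Qed.

Lemma ple A B : measurable A -> measurable B -> A `<=` B -> p A <= p B.
Proof.
move=> mA mB AB; rewrite /p fine_le //; try exact: fin_num_measure.
by apply: le_measure => //; rewrite inE.
Qed.

Lemma p_sub_add A B C : measurable A -> measurable B -> measurable C ->
  A `<=` B `|` C -> p A <= p B + p C.
Proof.
move=> mA mB mC h.
have e : B `|` C = B `|` (C `&` ~` B).
  apply/seteqP; split => z /=.
  - case=> [hb|hc]; [by left|]; case: (pselect (B z)) => hb; [by left|by right].
  - by case=> [hb|[hc _]]; [left|right].
have hm : measurable (C `&` ~` B) by apply: measurableI => //; apply: measurableC.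
have h1 : p A <= p (B `|` C) by apply: ple => //; apply: measurableU.
apply: le_trans h1 _.
rewrite e pU //; last by apply/seteqP; split => z //= [hb [_ hnb]].
rewrite lerD2l; apply: ple => // z [] //.
Qed.

Lemma mpre (h : X -> bool) b : measurable_fun setT h -> measurable (h @^-1` [set b]).
Proof.
by move=> mh; have := mh measurableT [set b] I; rewrite setTI.
Qed.


Lemma mBset (h : X -> bool) : measurable_fun setT h ->
  measurable [set z : X * bool | h z.1 != z.2].
Proof.
move=> mh.
have -> : [set z : X * bool | h z.1 != z.2] =
  (h @^-1` [set true] `*` [set false]) `|` (h @^-1` [set false] `*` [set true]).
  apply/seteqP; split => -[x y] /=.
  - by case: (h x); case: y => //= _; [left|right].
  - by case=> -[-> ->].
by apply: measurableU; apply: measurableX => //; apply: mpre.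
Qed.

Lemma mDset (h1 h2 : X -> bool) : measurable_fun setT h1 -> measurable_fun setT h2 ->
  measurable [set z : X * bool | h1 z.1 != h2 z.1].
Proof.
move=> m1 m2.
have -> : [set z : X * bool | h1 z.1 != h2 z.1] =
  ((h1 @^-1` [set true] `&` h2 @^-1` [set false]) `|`
   (h1 @^-1` [set false] `&` h2 @^-1` [set true])) `*` setT.
  apply/seteqP; split => -[x y] /=.
  - by case: (h1 x); case: (h2 x) => //= _; split => //; [left|right].
  - by case=> -[][-> ->].
apply: measurableX => //; apply: measurableU; apply: measurableI; exact: mpre.
Qed.

Lemma mEset (G : set (X -> bool)) : measurable (AGR G) ->
  measurable [set z : X * bool | AGR G z.1].
Proof.
move=> mA; have -> : [set z : X * bool | AGR G z.1] = AGR G `*` setT.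
  by apply/seteqP; split => -[x y] //= [].
exact: measurableX.
Qed.

Lemma riskG_eq (G : set (X -> bool)) fs f : G fs ->
  [set z | (AGR G z.1 /\ exists g, G g /\ f z.1 != g z.1)
                   \/ (~ AGR G z.1 /\ f z.1 != z.2)] =
  ([set z : X * bool | AGR G z.1] `&` [set z | f z.1 != fs z.1]) `|`
  (~` [set z : X * bool | AGR G z.1] `&` [set z | f z.1 != z.2]).
Proof.
move=> Gfs; apply/seteqP; split => z /=.
- case=> [[hA [g [Gg hg]]]|[hA hf]]; [left|right] => //; split => //.
  by rewrite (hA fs g Gfs Gg).
- case=> [[hA hf]|[hA hf]]; [left|right] => //; split => //.
  by exists fs.
Qed.

Lemma riskG_le_risk (G : set (X -> bool)) fs : measurable (AGR G) ->
  measurable_fun setT fs -> G fs -> riskG P G fs <= risk P fs.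
Proof.
move=> mA mfs Gfs; rewrite /riskG /risk (riskG_eq G fs fs Gfs).
have -> : [set z : X * bool | fs z.1 != fs z.1] = set0.
  by apply/seteqP; split => z //=; rewrite eqxx.
rewrite setI0 set0U.
apply: ple.
- by apply: measurableI; [apply: measurableC; apply: mEset|apply: mBset].
- exact: mBset.
- by move=> z [].
Qed.

Lemma riskG_min (G : set (X -> bool)) fs f : measurable (AGR G) ->
  measurable_fun setT fs -> measurable_fun setT f -> G fs ->
  risk P fs <= risk P f -> riskG P G fs <= riskG P G f.
Proof.
move=> mA mfs mf Gfs hr; rewrite /riskG (riskG_eq G fs fs Gfs) (riskG_eq G fs f Gfs).
set E := [set z : X * bool | AGR G z.1].
set Bs := [set z : X * bool | fs z.1 != z.2].
set Bf := [set z : X * bool | f z.1 != z.2].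
set Df := [set z : X * bool | f z.1 != fs z.1].
have -> : [set z : X * bool | fs z.1 != fs z.1] = set0.
  by apply/seteqP; split => z //=; rewrite eqxx.
rewrite setI0 set0U.
have mE : measurable E by apply: mEset.
have mBs : measurable Bs by apply: mBset.
have mBf : measurable Bf by apply: mBset.
have mDf : measurable Df by apply: mDset.
have mCE : measurable (~` E) by apply: measurableC.
have split_ (B : set (X * bool)) : measurable B -> p B = p (E `&` B) + p (~` E `&` B).
  move=> mB; rewrite -pU; [|by apply: measurableI|by apply: measurableI|].
  - by rewrite -setIUl setUCr setTI.
  - by apply/seteqP; split => z //= [[h _] [h' _]].
have hs := split_ Bs mBs.
have hf := split_ Bf mBf.
have hU : p ((E `&` Df) `|` (~` E `&` Bf)) = p (E `&` Df) + p (~` E `&` Bf).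
  rewrite pU //; try by apply: measurableI.
  by apply/seteqP; split => z //= [[h _] [h' _]].
have hsub : p (E `&` Bf) <= p (E `&` Bs) + p (E `&` Df).
  apply: p_sub_add; try by apply: measurableI.
  move=> z [hE hB]; rewrite /Bs /Df /=.
  case: (pselect (f z.1 != fs z.1)) => h; [by right|left; split => //].
  move/negP/negPn/eqP: h => h; by rewrite -h.
change (p (~` E `&` Bs) <= p ((E `&` Df) `|` (~` E `&` Bf))).
rewrite hU.
have : risk P fs = p Bs by [].
have : risk P f = p Bf by [].
have := p_ge0 (E `&` Bs).
rewrite /p in hs hf hsub hU * => *.
lra.
Qed.

End Prob.

Section S5.
Variable R : realType.

Lemma xlnx_ge (x : R) : 0 <= x -> -1 <= x * ln x.
Proof.
move=> x0; have [x00|xp] := leP x 0.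
  by rewrite ln0 // mulr0; lra.
have h : ln x^-1 <= x^-1 - 1 by apply: ln_le_sub1; rewrite invr_gt0.
rewrite lnV ?posrE // in h.
have : x * x^-1 = 1 by rewrite divff //; lra.
nra.
Qed.

Lemma final_count (K0 d' e' b : R) : 0 <= K0 -> 1 <= d' -> 2 <= ln e' -> 3 <= e' -> 0 <= b ->
  2 * (d' * (128 * e' + 800 * b)) * (K0 + 2 * ln (4 * (d' * (128 * e' + 800 * b))))
  <= 2 * (2000 * d' * (K0 + 2 * ln (4000 * d') + 2)) * (e' * ln e' + b * ln b).
Proof.
move=> K0p d1 le e3 b0.
set M := d' * (128 * e' + 800 * b).
have M0 : 0 < M by rewrite /M; nra.
have M1 : 1 <= 4 * M by rewrite /M; nra.
set Q := 2000 * d' * (K0 + 2 * ln (4000 * d') + 2).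
have Q0 : 0 <= Q.
  have : 0 <= ln (4000 * d') by apply: ln_ge0; lra.
  rewrite /Q; nra.
have hb := @xlnx_ge b b0.
have hel : 6 <= e' * ln e' by nra.
have [be|eb] := leP b e'.
- have l1 : 1 <= ln e' by lra.
  have := @Ybound _ K0 d' e' M K0p d1 l1 M0.
  have hM : M <= 1000 * d' * e' by rewrite /M; nra.
  move=> /(_ hM M1) h; rewrite -/Q in h.
  have : Q * (e' * ln e') <= Q * (2 * (e' * ln e' + b * ln b)) by apply: ler_wpM2l => //; lra.
  lra.
- have lb : 2 <= ln b.
    apply: (le_trans le); rewrite ler_ln ?posrE; lra.
  have l1 : 1 <= ln b by lra.
  have := @Ybound _ K0 d' b M K0p d1 l1 M0.
  have hM : M <= 1000 * d' * b by rewrite /M; nra.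
  move=> /(_ hM M1) h; rewrite -/Q in h.
  have : Q * (b * ln b) <= Q * (2 * (e' * ln e' + b * ln b)) by apply: ler_wpM2l => //; nra.
  lra.
Qed.
End S5.


Lemma Rhat_ge0 (R : realType) (X : Type) xs yl t (f : X -> bool) : 0 <= Rhat R xs yl t f.
Proof. by rewrite /Rhat; apply: divr_ge0; apply: ler0n. Qed.

Lemma min_exists (Q : nat -> Prop) : (exists n, Q n) -> exists n, Q n /\ forall m, (m < n)%N -> ~ Q m.
Proof.
move=> [n Qn].
have ex : exists n, asbool (Q n) by exists n; apply/asboolP.
case: (ex_minnP ex) => m /asboolP Qm hm; exists m; split => // k km Qk.
have := hm k (introT (asboolP _) Qk); rewrite leqNgt km //.
Qed.

Theorem lemma14 (R : realType) (d : nat) (delta : R) :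
  0 < delta < 1 ->
  exists (C eps0 : R), 0 < C /\ 0 < eps0 /\
  forall (dX : measure_display) (X : measurableType dX)
    (F : set (X -> bool)) (P : probability (X * bool)%type R)
    (fstar : X -> bool) (eps : R)
    (xs : nat -> X) (ys : nat -> bool)
    (G : nat -> set (X -> bool)) (yl : nat -> bool) (fh : nat -> X -> bool),
  VCdim F d ->
  (forall f, F f -> measurable_fun setT f) ->
  (forall H, H `<=` F -> measurable (AGR H)) ->
  F fstar -> (forall f, F f -> risk P fstar <= risk P f) ->
  0 < eps < eps0 ->
  is_run F d delta xs ys G yl fh ->
  eventK P F d delta eps xs G yl fh ->
  exists T : nat,
    stops d delta eps xs yl fh T /\ reached d delta eps xs yl fh T /\
    T%:R <= C * (eps^-1 * ln (eps^-1)
                 + risk P fstar / eps ^+ 2 * ln (risk P fstar / eps ^+ 2)).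
Proof.
move=> /andP[d0 d1].
set d' : R := d%:R + 1.
have d'1 : 1 <= d' by rewrite /d'; have := ler0n R d; lra.
set K0 := ln (16 * expR 1 / delta).
have e1 : 1 <= expR 1 :> R by have := expR_ge1Dx (1 : R); lra.
have K01 : 1 <= K0.
  have <- : ln (expR 1) = 1 :> R by rewrite expRK.
  rewrite /K0 ler_ln ?posrE; last 2 first.
  - lra.
  - by apply: divr_gt0; lra.
  rewrite ler_pdivlMr //; nra.
have lD : 0 <= ln (4000 * d') by apply: ln_ge0; lra.
exists (8000 * d' * (K0 + 2 * ln (4000 * d') + 2)), (expR (-2)).
split; first by apply: mulr_gt0; [lra|lra].
split; first exact: expR_gt0.
move=> dX X F P fstar eps xs ys G yl fh _ mF mAGR Ffs hmin /andP[e0 eeps] Hrun HK.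
case: Hrun => HG0 [Hyl [Herm [HGp HGn]]].
have reached_le : forall s t, (s <= t)%N -> reached d delta eps xs yl fh t ->
    reached d delta eps xs yl fh s.
  by move=> s t st h u us; apply: h; apply: leq_trans us st.
have inv : forall t, reached d delta eps xs yl fh t.+1 -> G t fstar /\ G t `<=` F.
  elim=> [|t IH] hr; first by rewrite HG0; split.
  have [IH1 IH2] := IH (reached_le _ _ (leqnSn _) hr).
  case: (pselect (is_pow2 t.+1)) => hp; last by rewrite HGn.
  rewrite HGp //; split; last by move=> f [].
  split => //.
  have [Ffh ERM] := Herm t.+1 isT hp.
  have mA := mAGR _ IH2.
  have hr1 := reached_le _ _ (leqnSn _) hr.
  have [K1 _] := HK t.+1 hp hr1 (fh t.+1) Ffh.
  have [_ K2] := HK t.+1 hp hr1 fstar Ffs.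
  rewrite /= in K1 K2.
  set n := t.+1%:R / 2 in K1 K2 *; set dl := delta / (2 * t.+1%:R) in K1 K2 *.
  set rh := Rhat R xs yl t.+1 (fh t.+1) in K1 K2 *.
  set r := riskG P (G t) fstar in K1 K2 *.
  set r' := riskG P (G t) (fh t.+1) in K1 K2 *.
  have h1 : r' <= rh + sig_hat_RmRh n dl d rh.
    by apply: (le_trans K1); rewrite lerD2l /sig_RmRh ge_min lexx.
  have h2 : Rhat R xs yl t.+1 fstar <= r + sig_bar_RhmR n dl d r.
    by apply: (le_trans K2); rewrite lerD2l /sig_RhmR ge_min lexx.
  have rr' : r <= r'.
    exact: (@riskG_min _ _ _ P (G t) fstar (fh t.+1) mA (mF _ Ffs) (mF _ Ffh) IH1 (hmin _ Ffh)).
  have r0 : 0 <= r by apply: fine_ge0; apply: measure_ge0.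
  have rh0 : 0 <= rh by apply: Rhat_ge0.
  rewrite /sig_active /= -/n -/dl.
  move: h1 h2; rewrite /sig_hat_RmRh /sig_bar_RhmR.
  set a := Acst n dl d / n.
  move=> h1 h2.
  have s1 := @sqrt_mono_mul _ a _ _ r0 rr'.
  have s2 := @sqrt_mono_mul _ a _ _ (le_trans r0 rr') h1.
  have := sqrtr_ge0 (a * rh).
  lra.
set rho := risk P fstar.
have rho0 : 0 <= rho by apply: fine_ge0; apply: measure_ge0.
set e' := eps^-1.
have ee : e' * eps = 1 by rewrite /e' mulVf //; lra.
have hexp : expR (-2) * expR 2 = 1 :> R by rewrite -expRD addNr expR0.
have ex2 := expR_gt0 (2 : R).
have e'big : expR 2 < e' by nra.
have le' : 2 <= ln e'.
  have <- : ln (expR 2) = 2 :> R by rewrite expRK.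
  rewrite ler_ln ?posrE; lra.
have e'3 : 3 <= e' by have := expR_ge1Dx (2 : R); lra.
set b := rho / eps ^+ 2.
have hb : b = rho * e' ^+ 2 by rewrite /b /e' exprVn.
have b0 : 0 <= b by rewrite hb; apply: mulr_ge0 => //; apply: sqr_ge0.
set M := d' * (128 * e' + 800 * b).
have M0 : 0 < M by rewrite /M; apply: mulr_gt0; lra.
set Y := 2 * M * (K0 + 2 * ln (4 * M)).
have M1 : 1 <= M.
  rewrite /M; have h : 1 <= 128 * e' + 800 * b by lra.
  by rewrite -[1]mul1r; apply: ler_pM => //; lra.
have Y1 : 1 <= Y.
  have : 0 <= ln (4 * M) by apply: ln_ge0; lra.
  rewrite /Y; nra.
have [k [Yk kY]] := @pow2_between _ Y Y1.
set T0 := (2 ^ k)%N in Yk kY.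
have T01 : (0 < T0)%N by rewrite expn_gt0.
have stopT0 : reached d delta eps xs yl fh T0 -> stops d delta eps xs yl fh T0.
  move=> hr; have hp : is_pow2 T0 by exists k.
  split => //.
  have [G1 G2] : G T0.-1 fstar /\ G T0.-1 `<=` F by apply: inv; rewrite prednK.
  have mA := mAGR _ G2.
  have [Ffh ERM] := Herm T0 T01 hp.
  have [_ K2] := HK T0 hp hr fstar Ffs.
  rewrite /= in K2.
  have t1 : 1 <= T0%:R :> R by rewrite ler1n.
  have hA := @A_bound _ d delta T0%:R (introT andP (conj d0 d1)) t1.
  rewrite -/K0 -/d' in hA.
  have hreq := @req _ K0 M T0%:R M0 (lt_le_trans ltr01 t1) Yk.
  rewrite /sig_active /=.
  set n := T0%:R / 2 in K2 hA *; set dl := delta / (2 * T0%:R) in K2 hA *.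
  set rh := Rhat R xs yl T0 (fh T0).
  set r := riskG P (G T0.-1) fstar in K2 *.
  have h2 : Rhat R xs yl T0 fstar <= r + sig_bar_RhmR n dl d r.
    by apply: (le_trans K2); rewrite lerD2l /sig_RhmR ge_min lexx.
  move: h2; rewrite /sig_hat_RmRh /sig_bar_RhmR.
  set a := Acst n dl d / n in hA *.
  move=> h2.
  have Lt0 : 0 <= K0 + 2 * ln T0%:R.
    have : 0 <= ln (T0%:R : R) by apply: ln_ge0.
    lra.
  have hMd : M = d' * (128 * e' + 800 * rho * e' ^+ 2) by rewrite /M hb mulrA.
  have [ha har] := @a_small _ a T0%:R d' (K0 + 2 * ln T0%:R) M e' eps rho
     (lt_le_trans ltr01 t1) (lt_le_trans ltr01 d'1) Lt0 hA hreq hMd ee e0 rho0.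
  have r0 : 0 <= r by apply: fine_ge0; apply: measure_ge0.
  have rrho : r <= rho by apply: (@riskG_le_risk _ _ _ P (G T0.-1) fstar mA (mF _ Ffs) G1).
  have rh0 : 0 <= rh by apply: Rhat_ge0.
  have rhs : rh <= Rhat R xs yl T0 fstar by apply: ERM.
  apply: (@final_bound _ a eps rho r rh) => //.
  exact: le_trans rhs h2.
have exS : exists s, stops d delta eps xs yl fh s /\ (s <= T0)%N.
  case: (pselect (reached d delta eps xs yl fh T0)) => h.
    by exists T0; split => //; apply: stopT0.
  apply: contrapT => hn; apply: h => s hs hst; apply: hn; exists s; split => //.
  exact: ltnW.
have [T [[sT leT] minT]] := @min_exists _ exS.
exists T; split => //; split.
  move=> s sT' st; apply: (minT s sT'); split => //.
  exact: ltnW (leq_trans sT' leT).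
have hfc := @final_count _ K0 d' e' b (le_trans ler01 K01) d'1 le' e'3 b0.
rewrite -/M -/Y in hfc.
have : (T%:R : R) <= T0%:R by rewrite ler_nat.
lra.
Qed.
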